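(* Let $C\subset\mathbf{P}^2(\mathbf{C})$ be an irreducible plane curve of type $(d,d-2)$, with singular point $Q$ of multiplicity $d-2$, and let $T(C)=\{(p_1,q_1),\dots,(p_l,q_l)\}$ be its 2-formula. Then: (i) $\sum_{i=1}^l q_i=2\sum_{i=1}^l p_i+2$; (ii) for each $i$, either $p_i=q_i$ or $\min\{p_i,q_i\}$ is even; (iii) there exists $i$ such that $q_i$ is odd.
   Context: A plane curve of type $(d,\nu)$ is a plane curve of degree $d$ whose singular points have maximal multiplicity $\nu$. The 2-formula $T(C)$: choose homogeneous coordinates $(x,y,z)$ with $Q=(0:0:1)$, so that $C$ is given by $F(x,y)z^2+2G(x,y)z+H(x,y)=0$ with $F,G,H$ homogeneous of degrees $d-2,d-1,d$; put $\Delta=G^2-FH$; let $t_1,\dots,t_l\in\mathbf{P}^1$ be all the distinct roots of $F\Delta=0$ and set $(p_i,q_i)=(\mathrm{ord}_{t_i}F,\mathrm{ord}_{t_i}\Delta)$, the multiplicities of $t_i$ as a root of $F$ and of $\Delta$; then $T(C)=\{(p_1,q_1),\dots,(p_l,q_l)\}$. *)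

(* Defs.v *)
From HB Require Import structures.
From mathcomp Require Import all_boot all_order all_algebra.
From mathcomp Require Import mpoly.
From mathcomp Require Import complex.
From mathcomp Require Import reals.

Set Implicit Arguments.
Unset Strict Implicit.
Unset Printing Implicit Defensive.

Import Order.TTheory GRing.Theory Num.Theory.
Local Open Scope ring_scope.

Section PlaneCurves.
Variable K : fieldType.

Definition x3 : {mpoly K[3]} := 'X_(@inord 2 0).
Definition y3 : {mpoly K[3]} := 'X_(@inord 2 1).
Definition z3 : {mpoly K[3]} := 'X_(@inord 2 2).

Definition to3 (f : {mpoly K[2]}) : {mpoly K[3]} := f \mPo [tuple x3; y3].

Definition curve_poly (F G H : {mpoly K[2]}) : {mpoly K[3]} :=
  to3 F * z3 ^+ 2 + 2%:R * to3 G * z3 + to3 H.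

Definition discr (F G H : {mpoly K[2]}) : {mpoly K[2]} := G ^+ 2 - F * H.

Definition mirreducible n (P : {mpoly K[n]}) : Prop :=
  (1 < msize P)%N /\
  forall A B : {mpoly K[n]}, P = A * B -> (msize A <= 1)%N \/ (msize B <= 1)%N.

(* points of P^2 are represented by nonzero vectors p : 'I_3 -> K *)
Definition nonzero_vec n (p : 'I_n -> K) : Prop := exists i, p i != 0.

Definition Q0 : 'I_3 -> K := fun i => if val i == 2%N then 1 else 0.

Definition singular_pt (P : {mpoly K[3]}) (p : 'I_3 -> K) : Prop :=
  nonzero_vec p /\ P.@[p] = 0 /\ forall i : 'I_3, (P^`M(i)).@[p] = 0.

Definition mult_at (P : {mpoly K[3]}) (p : 'I_3 -> K) (m : nat) : Prop :=
  (exists a : 'X_{1..3}, mdeg a = m /\ (P^`M[a]).@[p] != 0) /\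
  (forall a : 'X_{1..3}, (mdeg a < m)%N -> (P^`M[a]).@[p] = 0).

Definition curve_type (P : {mpoly K[3]}) (d nu : nat) : Prop :=
  [/\ P \is d.-homog, P != 0,
      (exists p, singular_pt P p /\ mult_at P p nu) &
      forall p m, singular_pt P p -> mult_at P p m -> (m <= nu)%N].

(* points of P^1: nonzero pairs (a,b) up to proportionality *)
Definition ev2 (t : K * K) : 'I_2 -> K := fun i => if val i == 0%N then t.1 else t.2.
Definition nonzero_pt (t : K * K) : Prop := t.1 != 0 \/ t.2 != 0.
Definition same_pt (t s : K * K) : Prop := t.1 * s.2 = s.1 * t.2.

(* the linear form b x - a y vanishing exactly at t = (a:b) *)
Definition lin_at (t : K * K) : {mpoly K[2]} :=
  t.2 *: 'X_(@inord 1 0) - t.1 *: 'X_(@inord 1 1).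

Definition mdvd n (A B : {mpoly K[n]}) : Prop := exists C, B = C * A.

Definition root_ord (f : {mpoly K[2]}) (t : K * K) (k : nat) : Prop :=
  mdvd (lin_at t ^+ k) f /\ ~ mdvd (lin_at t ^+ k.+1) f.

(* T is the 2-formula of the curve F z^2 + 2 G z + H = 0: there is an
   enumeration t_1,...,t_l of the distinct roots in P^1 of F*Delta with
   T = [(ord_{t_i} F, ord_{t_i} Delta)]_i *)
Definition two_formula (F G H : {mpoly K[2]}) (T : seq (nat * nat)) : Prop :=
  exists ts : seq (K * K),
  [/\ size ts = size T,
      forall i, (i < size ts)%N -> nonzero_pt (nth (0, 0) ts i),
      forall i j, (i < size ts)%N -> (j < size ts)%N -> i != j ->
        ~ same_pt (nth (0, 0) ts i) (nth (0, 0) ts j),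
      forall t, nonzero_pt t ->
        ((F * discr F G H).@[ev2 t] = 0 <->
         exists2 i, (i < size ts)%N & same_pt t (nth (0, 0) ts i)) &
      forall i, (i < size ts)%N ->
        root_ord F (nth (0, 0) ts i) (nth (0, 0)%N T i).1 /\
        root_ord (discr F G H) (nth (0, 0) ts i) (nth (0, 0)%N T i).2].

End PlaneCurves.

(* Main.v *)
Require Import Defs.
From HB Require Import structures.
From mathcomp Require Import all_boot all_order all_algebra.
From mathcomp Require Import mpoly.
From mathcomp Require Import complex.
From mathcomp Require Import reals.
From mathcomp Require Import ring lra zify.
Set Implicit Arguments.
Unset Strict Implicit.
Unset Printing Implicit Defensive.
Import Order.TTheory GRing.Theory Num.Theory.
Local Open Scope ring_scope.

Section Bin.
Variable K : numClosedFieldType.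
Local Notation P2 := {mpoly K[2]}.
Implicit Types (p q : {poly K}) (c : K).

Definition dhv (i : 'I_2) : {poly K} := if val i == 0%N then 'X else 1.
Definition dh (f : P2) : {poly K} := mmap (@polyC K) dhv f.

Lemma dhD (p q : P2) : dh (p + q) = dh p + dh q. Proof. exact: raddfD. Qed.
Lemma dhB (p q : P2) : dh (p - q) = dh p - dh q. Proof. exact: raddfB. Qed.
Lemma dhM (p q : P2) : dh (p * q) = dh p * dh q. Proof. exact: rmorphM. Qed.
Lemma dhZ c (p : P2) : dh (c *: p) = c *: dh p.
Proof. by rewrite /dh mmapZ mul_polyC. Qed.
Lemma dhC c : dh c%:MP = c%:P.
Proof. by rewrite /dh mmapC. Qed.
Lemma dhX (u : 'X_{1..2}) : dh 'X_[u] = 'X^(u ord0).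
Proof.
rewrite /dh mmapX /mmap1 !big_ord_recl big_ord0 /dhv /=.
by rewrite expr1n !mulr1.
Qed.
Lemma dh_sum (I : Type) (r : seq I) (F : I -> P2) :
  dh (\sum_(i <- r) F i) = \sum_(i <- r) dh (F i).
Proof. exact: raddf_sum. Qed.

Definition mon (i j : nat) : 'X_{1..2} :=
  [multinom (if val k == 0%N then i else j) | k < 2].

Lemma mon0 i j : mon i j ord0 = i. Proof. by rewrite mnmE. Qed.
Lemma mon1 i j : mon i j (@inord 1 1) = j. Proof. by rewrite mnmE /=; rewrite inordK. Qed.

Lemma mdeg_mon i j : mdeg (mon i j) = (i + j)%N.
Proof. by rewrite mdegE !big_ord_recl big_ord0 !mnmE /= addn0. Qed.

Lemma mdeg2 (u : 'X_{1..2}) : mdeg u = (u ord0 + u (@inord 1 1))%N.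
Proof.
rewrite mdegE !big_ord_recl big_ord0 addn0; congr (_ + u _)%N.
by apply/val_inj; rewrite /= inordK.
Qed.

Lemma monE (u : 'X_{1..2}) : u = mon (u ord0) (mdeg u - u ord0).
Proof.
apply/mnmP=> k; rewrite mnmE mdeg2 addKn; case: k => [[|[|k]] hk] //=.
- by congr (u _); apply/val_inj.
- by congr (u _); apply/val_inj; rewrite /= inordK.
Qed.

Definition hom (m : nat) (p : {poly K}) : P2 :=
  \sum_(i < m.+1) p`_i *: 'X_[mon i (m - i)].

Lemma hom0 m : hom m 0 = 0.
Proof. by rewrite /hom big1 // => i _; rewrite coef0 scale0r. Qed.
Lemma homD m p q : hom m (p + q) = hom m p + hom m q.
Proof. by rewrite /hom -big_split; apply: eq_bigr => i _; rewrite coefD scalerDl. Qed.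
Lemma homZ m c p : hom m (c *: p) = c *: hom m p.
Proof. by rewrite /hom scaler_sumr; apply: eq_bigr => i _; rewrite coefZ scalerA. Qed.
Lemma homN m p : hom m (- p) = - hom m p.
Proof. by rewrite -scaleN1r homZ scaleN1r. Qed.
Lemma homB m p q : hom m (p - q) = hom m p - hom m q.
Proof. by rewrite homD homN. Qed.
Lemma hom_sum m (I : Type) (r : seq I) (F : I -> {poly K}) :
  hom m (\sum_(i <- r) F i) = \sum_(i <- r) hom m (F i).
Proof.
elim: r => [|a r IH]; first by rewrite !big_nil hom0.
by rewrite !big_cons homD IH.
Qed.

Lemma homXn m k : (k <= m)%N -> hom m 'X^k = 'X_[mon k (m - k)].
Proof.
move=> km; rewrite /hom (bigD1 (Ordinal (km : k < m.+1)%N)) //= coefXn eqxx scale1r.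
rewrite big1 ?addr0 // => i /eqP hi; rewrite coefXn.
case: eqP => [e|]; last by rewrite scale0r.
by case: hi; apply/val_inj.
Qed.

Lemma dh_hom m p : (size p <= m.+1)%N -> dh (hom m p) = p.
Proof.
move=> sp; rewrite /hom dh_sum.
transitivity (\sum_(i < m.+1) p`_i *: 'X^i).
  by apply: eq_bigr => i _; rewrite dhZ dhX mon0.
by rewrite -poly_def; apply/polyP => i; rewrite coef_poly; case: ltnP => // h;
  rewrite nth_default // (leq_trans sp h).
Qed.

Lemma hom_dh m W : W \is m.-homog -> hom m (dh W) = W.
Proof.
move=> hW; rewrite [in RHS](mpolyE W) [W in dh W](mpolyE W) dh_sum hom_sum.
rewrite !big_seq; apply: eq_bigr => u hu.
rewrite dhZ homZ dhX; congr (_ *: _).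
have du : mdeg u = m by apply: (dhomog_mf hW).
rewrite homXn; last by rewrite -du mdeg2 leq_addr.
by rewrite [in RHS](monE u) du.
Qed.


Lemma ev2X (u : 'X_{1..2}) (t : K * K) :
  ('X_[u]).@[ev2 t] = t.1 ^+ u ord0 * t.2 ^+ u (@inord 1 1).
Proof.
rewrite mevalX !big_ord_recl big_ord0 mulr1 /ev2 /=; congr (_ * _ ^+ u _).
by apply/val_inj; rewrite /= inordK.
Qed.

Lemma meval_sum (v : 'I_2 -> K) (I : Type) (r : seq I) (F : I -> P2) :
  (\sum_(i <- r) F i).@[v] = \sum_(i <- r) (F i).@[v].
Proof. exact: raddf_sum. Qed.

Lemma eval_dh (W : P2) r : W.@[ev2 (r, 1)] = (dh W).[r].
Proof.
rewrite [in LHS](mpolyE W) [in RHS](mpolyE W) dh_sum meval_sum horner_sum.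
apply: eq_bigr => u _; rewrite mevalZ dhZ dhX hornerZ hornerXn ev2X /=.
by rewrite expr1n mulr1.
Qed.

Lemma eval_scale (W : P2) m (c a b : K) : W \is m.-homog ->
  W.@[ev2 (c * a, c * b)] = c ^+ m * W.@[ev2 (a, b)].
Proof.
move=> hW; rewrite [in LHS](mpolyE W) [in RHS](mpolyE W) !meval_sum mulr_sumr !big_seq.
apply: eq_bigr => u hu; rewrite !mevalZ !ev2X /=.
have du : mdeg u = m by apply: (dhomog_mf hW).
by rewrite -du mdeg2 !exprMn exprD; ring.
Qed.

Lemma eval_inf (W : P2) m : W \is m.-homog -> W.@[ev2 (1, 0)] = (dh W)`_m.
Proof.
move=> hW; rewrite [in LHS](mpolyE W) [in RHS](mpolyE W) dh_sum meval_sum coef_sum !big_seq.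
apply: eq_bigr => u hu; rewrite mevalZ dhZ dhX coefZ coefXn ev2X /= expr1n mul1r.
have du : mdeg u = m by apply: (dhomog_mf hW).
move: du; rewrite mdeg2 => <-.
case: (u (@inord 1 1)) => [|k]; first by rewrite addn0 eqxx expr0.
by rewrite expr0n /= -{2}(addn0 (u ord0)) eqn_add2l.
Qed.

Lemma size_dh (W : P2) m : W \is m.-homog -> (size (dh W) <= m.+1)%N.
Proof.
move=> hW; rewrite (mpolyE W) dh_sum; apply/leq_sizeP => i hi.
rewrite coef_sum big_seq big1 // => u hu; rewrite dhZ dhX coefZ coefXn.
have du : mdeg u = m by apply: (dhomog_mf hW).
case: eqP => [e|]; last by rewrite mulr0.
by move: hi; rewrite e -du mdeg2 ltnNge leq_addr.
Qed.

Lemma dh_inj (A B : P2) m : A \is m.-homog -> B \is m.-homog -> dh A = dh B -> A = B.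
Proof. by move=> hA hB e; rewrite -(hom_dh hA) -(hom_dh hB) e. Qed.


Lemma hom_homog m p : hom m p \is m.-homog.
Proof.
apply: rpred_sum => i _; apply: rpredZ; rewrite dhomogX; apply/eqP.
transitivity (i + (m - i))%N; first exact: mdeg_mon.
by rewrite subnKC // -ltnS.
Qed.

Lemma X0E : ('X_(@inord 1 0) : P2) = 'X_[mon 1 0].
Proof.
congr 'X_[_]; apply/mnmP => k; rewrite !mnmE; case: k => [[|[|k]] hk] //=;
  by rewrite -(inj_eq val_inj) /= inordK.
Qed.
Lemma X1E : ('X_(@inord 1 1) : P2) = 'X_[mon 0 1].
Proof.
congr 'X_[_]; apply/mnmP => k; rewrite !mnmE; case: k => [[|[|k]] hk] //=;
  by rewrite -(inj_eq val_inj) /= inordK.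
Qed.

Lemma lin_homog (t : K * K) : lin_at t \is 1.-homog.
Proof.
by rewrite /lin_at X0E X1E; apply: rpredB; apply: rpredZ; rewrite dhomogX; apply/eqP; exact: mdeg_mon.
Qed.

Lemma dh_lin (t : K * K) : dh (lin_at t) = t.2 *: 'X - t.1%:P.
Proof.
by rewrite /lin_at X0E X1E dhB !dhZ !dhX !mon0 expr0 expr1 alg_polyC.
Qed.

Lemma eval_lin (t s : K * K) : (lin_at t).@[ev2 s] = t.2 * s.1 - t.1 * s.2.
Proof. by rewrite /lin_at X0E X1E mevalB !mevalZ !ev2X !mon0 !mon1 /=; ring. Qed.

Lemma homog0_const (W : P2) : W \is 0.-homog -> W = ((dh W)`_0)%:MP.
Proof.
move=> hW; rewrite -{1}(hom_dh hW) /hom big_ord_recl big_ord0 addr0.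
have -> : mon 0 (0 - 0) = 0%MM by apply/mnmP => k; rewrite !mnmE; case: ifP.
by rewrite mpolyX0 -mul_mpolyC mulr1.
Qed.

Lemma core (W : P2) m (t : K * K) : W \is m.-homog -> nonzero_pt t ->
  W.@[ev2 t] = 0 -> exists2 C : P2, C \is m.-1.-homog & W = lin_at t * C.
Proof.
move=> hW nt Wt.
have [t2n0|t20] := eqVneq t.2 0; last first.
  pose r := t.1 / t.2.
  have tE : t = (t.2 * r, t.2 * 1) by rewrite /r mulr1 mulrC divfK //; case: (t).
  have : root (dh W) r.
    rewrite /root -eval_dh; have := Wt; rewrite {1}tE (eval_scale _ _ _ hW) => /eqP.
    by rewrite mulf_eq0 expf_eq0 (negbTE t20) andbF.
  case/factor_theorem => q hq.
  have sz := size_dh hW.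
  case: m hW sz => [|m'] hW sz.
    exists 0; first exact: rpred0.
    rewrite mulr0 -(hom_dh hW) hq.
    have q0 : q = 0.
      apply/eqP; apply: contraLR sz => qn0; rewrite -ltnNge hq size_mul ?polyXsubC_eq0 //.
      by rewrite size_XsubC addn2 /= ltnS size_poly_gt0.
    by rewrite q0 mul0r hom0.
  exists (t.2^-1 *: hom m' q); first by rewrite /=; apply: rpredZ; apply: hom_homog.
  apply: (dh_inj hW).
    by rewrite -[m'.+1]/(1 + m')%N; apply: dhomogM; [apply: lin_homog | apply: rpredZ; apply: hom_homog].
  have szq : (size q <= m'.+1)%N.
    have [->|qn0] := eqVneq q 0; first by rewrite size_poly0.
    by move: sz; rewrite hq size_mul ?polyXsubC_eq0 // size_XsubC addn2.
  rewrite dhM dhZ dh_hom // dh_lin hq -!mul_polyC.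
  have e1 : t.1 = t.2 * r by rewrite /r mulrC divfK.
  have e2 : t.2%:P * (t.2^-1)%:P = 1 by rewrite -polyCM mulfV.
  clearbody r; rewrite e1 polyCM; transitivity (t.2%:P * (t.2^-1)%:P * (q * ('X - r%:P))).
    by rewrite e2 mul1r.
  ring.
have t1 : t.1 != 0 by case: nt => //; rewrite t2n0 eqxx.
have tE : t = (t.1 * 1, t.1 * 0) by rewrite mulr1 mulr0 -t2n0; case: (t).
have Wi : (dh W)`_m = 0.
  rewrite -(eval_inf hW); have := Wt; rewrite {1}tE (eval_scale _ _ _ hW) => /eqP.
  by rewrite mulf_eq0 expf_eq0 (negbTE t1) andbF => /eqP.
have sz : (size (dh W) <= m)%N.
  apply/leq_sizeP => i hi; case: (ltngtP i m) => [h|h|->//].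
    by move: hi; rewrite leqNgt h.
  by rewrite nth_default // (leq_trans (size_dh hW) h).
case: m hW Wi sz => [|m'] hW Wi sz.
  exists 0; first exact: rpred0.
  rewrite mulr0 -(hom_dh hW).
  by move: sz; rewrite size_poly_leq0 => /eqP ->; rewrite hom0.
exists ((- t.1)^-1 *: hom m' (dh W)); first by rewrite /=; apply: rpredZ; apply: hom_homog.
apply: (dh_inj hW).
  by rewrite -[m'.+1]/(1 + m')%N; apply: dhomogM; [apply: lin_homog | apply: rpredZ; apply: hom_homog].
rewrite dhM dhZ dh_hom // dh_lin t2n0 scale0r sub0r -mul_polyC.
by rewrite mulrA -polyCN -polyCM mulfV ?oppr_eq0 // mul1r.
Qed.


Lemma coef_size_gt (p : {poly K}) i : p`_i != 0 -> (i < size p)%N.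
Proof. by apply: contraR; rewrite -leqNgt => h; rewrite nth_default. Qed.

Lemma root_exists (W : P2) m : W \is m.-homog -> (0 < m)%N ->
  exists t : K * K, nonzero_pt t /\ W.@[ev2 t] = 0.
Proof.
move=> hW m0; have [c0|cn0] := eqVneq (dh W)`_m 0.
  by exists (1, 0); split; [left; exact: oner_neq0 | rewrite (eval_inf hW)].
have sz : size (dh W) = m.+1.
  by apply/eqP; rewrite eqn_leq size_dh //= coef_size_gt.
have : size (dh W) != 1%N by rewrite sz eqSS -lt0n.
case/closed_rootP => r hr; exists (r, 1); split; first by right; exact: oner_neq0.
by rewrite eval_dh; apply/eqP.
Qed.

Lemma dh_eq0 (W : P2) m : W \is m.-homog -> (dh W == 0) = (W == 0).
Proof.
move=> hW; apply/eqP/eqP => [e|->]; last by rewrite /dh raddf0.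
by rewrite -(hom_dh hW) e hom0.
Qed.

Lemma nonvanish (W : P2) m : W \is m.-homog -> W != 0 ->
  exists x, W.@[ev2 (x, 1)] != 0.
Proof.
move=> hW Wn0; have pn0 : dh W != 0 by rewrite (dh_eq0 hW).
pose rs := [seq i%:R | i <- iota 0 (size (dh W))] : seq K.
have urs : uniq rs.
  rewrite map_inj_uniq ?iota_uniq // => i j /eqP; rewrite eqr_nat => /eqP //.
have : ~~ all (root (dh W)) rs.
  apply/negP => al; have := max_poly_roots pn0 al urs.
  by rewrite size_map size_iota ltnn.
case/allPn => x _ hx; exists x; by rewrite eval_dh.
Qed.

Lemma factorize (W : P2) m : W \is m.-homog -> W != 0 ->
  exists c (us : seq (K * K)), [/\ c != 0, size us = m,
    forall u, u \in us -> nonzero_pt u &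
    W = c%:MP * \prod_(u <- us) lin_at u].
Proof.
elim: m W => [|m IH] W hW Wn0.
  exists (dh W)`_0, [::]; split => //.
  - by apply: contra Wn0 => /eqP e; rewrite (homog0_const hW) e mpolyC0.
  - by rewrite big_nil mulr1; apply: homog0_const.
have [t [nt Wt]] := root_exists hW (ltn0Sn m).
have [C hC WE] := core hW nt Wt.
have Cn0 : C != 0 by apply: contra Wn0 => /eqP C0; rewrite WE C0 mulr0.
have [c [us [cn0 sus nus CE]]] := IH C hC Cn0.
exists c, (t :: us); split => //.
- by rewrite /= sus.
- by move=> u; rewrite inE => /orP [/eqP ->|]; [exact: nt | exact: nus].
- by rewrite WE CE big_cons mulrCA.
Qed.

Definition samep (u t : K * K) : bool := u.1 * t.2 == t.1 * u.2.

Lemma samep_refl (t : K * K) : samep t t. Proof. by rewrite /samep mulrC. Qed.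
Lemma samep_sym (u t : K * K) : samep u t = samep t u.
Proof. by rewrite /samep eq_sym. Qed.
Lemma samep_trans (s t r : K * K) : nonzero_pt s -> samep t s -> samep s r -> samep t r.
Proof.
rewrite /samep => ns /eqP e1 /eqP e2; have [s20|s2n0] := eqVneq s.2 0.
  have s1 : s.1 != 0 by case: ns => //; rewrite s20 eqxx.
  have t2 : t.2 = 0 by apply/eqP; move: e1; rewrite s20 mulr0 => /esym/eqP; rewrite mulf_eq0 (negbTE s1).
  have r2 : r.2 = 0 by apply/eqP; move: e2; rewrite s20 mulr0 => /eqP; rewrite mulf_eq0 (negbTE s1).
  by rewrite t2 r2 !mulr0.
apply/eqP; apply: (mulIf s2n0).
transitivity ((t.1 * s.2) * r.2); first ring.
rewrite e1; transitivity ((s.1 * r.2) * t.2); first ring.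
rewrite e2; ring.
Qed.

Lemma samepP (u t : K * K) : reflect (same_pt u t) (samep u t).
Proof. by rewrite /samep /same_pt; apply: eqP. Qed.

Lemma lin_neq0 (t : K * K) : nonzero_pt t -> lin_at t != 0.
Proof.
move=> nt; case: nt => h.
  apply/eqP => e; have := eval_lin t (0, 1); rewrite e meval0 /= => /eqP.
  by rewrite mulr0 mulr1 sub0r eq_sym oppr_eq0 (negbTE h).
apply/eqP => e; have := eval_lin t (1, 0); rewrite e meval0 /= => /eqP.
by rewrite mulr0 mulr1 subr0 eq_sym (negbTE h).
Qed.

Lemma lin_self (t : K * K) : (lin_at t).@[ev2 t] = 0.
Proof. by rewrite eval_lin mulrC subrr. Qed.

Definition decomp (W : P2) (t : K * K) (k : nat) :=
  exists W' : P2, W = lin_at t ^+ k * W' /\ W'.@[ev2 t] != 0.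

Lemma decomp_ord (W : P2) (t : K * K) j k : nonzero_pt t -> decomp W t j -> root_ord W t k -> j = k.
Proof.
move=> nt [W' [WE W't]] [[C CE] nd].
have ln := lin_neq0 nt.
case: (ltngtP j k) => // h.
  exfalso; move: CE; rewrite WE -(subnKC h) exprD => e.
  have e' : W' = C * lin_at t * lin_at t ^+ (k - j.+1).
    by apply: (mulfI (expf_neq0 j ln)); rewrite e exprS; ring.
  by move: W't; rewrite e' !mevalM lin_self mulr0 mul0r eqxx.
exfalso; apply: nd; exists (lin_at t ^+ (j - k.+1) * W').
by rewrite WE -{1}(subnKC h) exprD; ring.
Qed.


Lemma decomp_mul (A B : P2) (t : K * K) a b :
  decomp A t a -> decomp B t b -> decomp (A * B) t (a + b).
Proof.
move=> [A' [AE A't]] [B' [BE B't]]; exists (A' * B'); split.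
  by rewrite AE BE exprD; ring.
by rewrite mevalM mulf_neq0.
Qed.

Lemma decomp_const c (t : K * K) : c != 0 -> decomp c%:MP t 0.
Proof. by move=> cn0; exists c%:MP; rewrite expr0 mul1r mevalC. Qed.

Lemma decomp_lin (u t : K * K) : nonzero_pt u -> nonzero_pt t ->
  decomp (lin_at u) t (samep u t).
Proof.
move=> nu nt; case: (boolP (samep u t)) => [/eqP e|ne]; last first.
  exists (lin_at u); rewrite expr0 mul1r; split => //.
  by rewrite eval_lin; apply: contra ne => /eqP h; rewrite /samep eq_sym -subr_eq0 -h; apply/eqP; ring.
suff [l [ln0 lE]] : exists l : K, l != 0 /\ lin_at u = l *: lin_at t.
  exists l%:MP; rewrite expr1 mevalC; split => //.
  by rewrite lE -mul_mpolyC mulrC.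
have [t20|t2n0] := eqVneq t.2 0.
  have t1 : t.1 != 0 by case: nt => //; rewrite t20 eqxx.
  have u2 : u.2 = 0 by apply/eqP; move: e; rewrite t20 mulr0 => /esym/eqP; rewrite mulf_eq0 (negbTE t1).
  have u1 : u.1 != 0 by case: nu => //; rewrite u2 eqxx.
  exists (u.1 / t.1); split; first by rewrite mulf_neq0 ?invr_eq0.
  rewrite /lin_at u2 t20 !scale0r !sub0r scalerN scalerA divfK //.
exists (u.2 / t.2); split.
  rewrite mulf_neq0 ?invr_eq0 //; apply/eqP => u20.
  have u10 : u.1 = 0 by apply/eqP; move: e; rewrite u20 mulr0 => /eqP; rewrite mulf_eq0 (negbTE t2n0) orbF.
  by case: nu; rewrite ?u10 ?u20 eqxx.
rewrite /lin_at scalerBr !scalerA divfK //; congr (_ - _ *: _).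
by apply: (mulIf t2n0); rewrite e; field.
Qed.

Lemma decomp_prod c (us : seq (K * K)) (t : K * K) : c != 0 ->
  (forall u, u \in us -> nonzero_pt u) -> nonzero_pt t ->
  decomp (c%:MP * \prod_(u <- us) lin_at u) t (count (samep^~ t) us).
Proof.
move=> cn0 nus nt; elim: us nus => [|u us IH] nus.
  by rewrite big_nil mulr1; apply: decomp_const.
rewrite big_cons /= mulrCA; apply: decomp_mul.
  by apply: decomp_lin => //; apply: nus; rewrite inE eqxx.
by apply: IH => v hv; apply: nus; rewrite inE hv orbT.
Qed.

Lemma decomp_exists (W : P2) m (t : K * K) : W \is m.-homog -> W != 0 ->
  nonzero_pt t -> exists k, decomp W t k.
Proof.
move=> hW Wn0 nt; have [c [us [cn0 _ nus WE]]] := factorize hW Wn0.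
by exists (count (samep^~ t) us); rewrite WE; apply: decomp_prod.
Qed.

Lemma decomp_neg (W : P2) (t : K * K) k : decomp W t k -> decomp (- W) t k.
Proof.
by move=> [W' [WE W't]]; exists (- W'); rewrite mevalN oppr_eq0 WE mulrN.
Qed.

Lemma decomp_sub_lt (X Y : P2) (t : K * K) x y :
  decomp X t x -> decomp Y t y -> (x < y)%N -> decomp (X - Y) t x.
Proof.
move=> [X' [XE X't]] [Y' [YE Y't]] h.
exists (X' - lin_at t ^+ (y - x) * Y'); split.
  by rewrite XE YE -{1}(subnKC (ltnW h)) exprD; ring.
rewrite mevalB mevalM rmorphXn /= lin_self expr0n subn_eq0 leqNgt h /=.
by rewrite mul0r subr0.
Qed.

Lemma decomp_sub_eq (X Y : P2) (t : K * K) x :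
  decomp X t x -> decomp Y t x -> mdvd (lin_at t ^+ x) (X - Y).
Proof.
move=> [X' [XE _]] [Y' [YE _]]; exists (X' - Y').
by rewrite XE YE; ring.
Qed.

Lemma decomp_root (W : P2) (t : K * K) k : decomp W t k -> (W.@[ev2 t] == 0) = (0 < k)%N.
Proof.
move=> [W' [WE W't]]; rewrite WE mevalM rmorphXn /= lin_self mulf_eq0 (negbTE W't) orbF.
by rewrite expf_eq0 eqxx andbT lt0n.
Qed.

Lemma root_ord_ge (W : P2) (t : K * K) (q x : nat) : root_ord W t q -> mdvd (lin_at t ^+ x) W -> (x <= q)%N.
Proof.
move=> [_ nd] [C CE]; rewrite leqNgt; apply/negP => h; apply: nd.
exists (C * lin_at t ^+ (x - q.+1)); rewrite CE -{1}(subnKC h) exprD; ring.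
Qed.


Lemma count_sumb (T : Type) (a : pred T) (s : seq T) :
  count a s = (\sum_(x <- s) (a x : nat))%N.
Proof. by elim: s => [|x s IH]; rewrite ?big_nil ?big_cons //= IH. Qed.

Lemma sum_ord (W : P2) m (ts : seq (K * K)) (f : nat -> nat) :
  W \is m.-homog -> W != 0 ->
  (forall i, (i < size ts)%N -> nonzero_pt (nth (0, 0) ts i)) ->
  (forall i j, (i < size ts)%N -> (j < size ts)%N -> i != j ->
        ~ same_pt (nth (0, 0) ts i) (nth (0, 0) ts j)) ->
  (forall t, nonzero_pt t -> W.@[ev2 t] = 0 ->
         exists2 i, (i < size ts)%N & same_pt t (nth (0, 0) ts i)) ->
  (forall i, (i < size ts)%N -> root_ord W (nth (0, 0) ts i) (f i)) ->
  (\sum_(i < size ts) f i)%N = m.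
Proof.
move=> hW Wn0 nts dts cov ro.
have [c [us [cn0 sus nus WE]]] := factorize hW Wn0.
have fE : forall i : 'I_(size ts), f i = count (samep^~ (nth (0, 0) ts i)) us.
  move=> i; apply/esym/(decomp_ord (nts _ (ltn_ord i))); last exact: ro.
  by rewrite WE; apply: decomp_prod => //; apply: nts.
rewrite (eq_bigr _ (fun i _ => fE i)).
under eq_bigr do rewrite count_sumb.
rewrite exchange_big /= -sus -[size us]sum1_size big_seq [in RHS]big_seq.
apply: eq_bigr => u hu.
have nu := nus u hu.
have Wu : W.@[ev2 u] = 0.
  apply/eqP; rewrite WE (decomp_root (decomp_prod cn0 nus nu)).
  by rewrite -has_count; apply/hasP; exists u => //; apply: samep_refl.
have [i0 hi0 si0] := cov u nu Wu.
rewrite (bigD1 (Ordinal hi0)) //= big1 ?addn0; first by move/samepP: si0 => ->.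
move=> j /eqP hj; case: (boolP (samep _ _)) => // sj; exfalso.
apply: (dts i0 j hi0 (ltn_ord j)); first by apply/eqP => e; apply: hj; apply/val_inj.
by apply/samepP; apply: (samep_trans nu); [rewrite samep_sym; apply/samepP|].
Qed.


Lemma lin_prop (u t : K * K) : nonzero_pt u -> nonzero_pt t -> samep u t ->
  exists l : K, l != 0 /\ lin_at u = l *: lin_at t.
Proof.
move=> nu nt /eqP e.
have [t20|t2n0] := eqVneq t.2 0.
  have t1 : t.1 != 0 by case: nt => //; rewrite t20 eqxx.
  have u2 : u.2 = 0 by apply/eqP; move: e; rewrite t20 mulr0 => /esym/eqP; rewrite mulf_eq0 (negbTE t1).
  have u1 : u.1 != 0 by case: nu => //; rewrite u2 eqxx.
  exists (u.1 / t.1); split; first by rewrite mulf_neq0 ?invr_eq0.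
  rewrite /lin_at u2 t20 !scale0r !sub0r scalerN scalerA divfK //.
exists (u.2 / t.2); split.
  rewrite mulf_neq0 ?invr_eq0 //; apply/eqP => u20.
  have u10 : u.1 = 0 by apply/eqP; move: e; rewrite u20 mulr0 => /eqP; rewrite mulf_eq0 (negbTE t2n0) orbF.
  by case: nu; rewrite ?u10 ?u20 eqxx.
rewrite /lin_at scalerBr !scalerA divfK //; congr (_ - _ *: _).
by apply: (mulIf t2n0); rewrite e; field.
Qed.

Lemma square_even (us : seq (K * K)) :
  (forall u, u \in us -> nonzero_pt u) ->
  (forall t, nonzero_pt t -> ~~ odd (count (samep^~ t) us)) ->
  exists l (vs : seq (K * K)), [/\ l != 0, ((size vs).*2 = size us)%N,
    (forall v, v \in vs -> nonzero_pt v) &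
    \prod_(u <- us) lin_at u = l%:MP * (\prod_(v <- vs) lin_at v) ^+ 2].
Proof.
move: {2}(size us) (leqnn (size us)) => N; elim: N us => [|N IH] us.
  rewrite leqn0 => /nilP -> _ _; exists 1, [::]; split => //.
  - exact: oner_neq0.
  - by rewrite !big_nil expr1n mulr1.
case: us => [_ _ _|u us' /= hN nus ev].
  exists 1, [::]; split => //; [exact: oner_neq0 | by rewrite !big_nil expr1n mulr1].
have nu : nonzero_pt u by apply: nus; rewrite inE eqxx.
have nus' : forall w, w \in us' -> nonzero_pt w by move=> w hw; apply: nus; rewrite inE hw orbT.
have : odd (count (samep^~ u) us').
  by have := ev u nu; rewrite /= samep_refl /= negbK.
move=> /odd_gt0; rewrite -has_count => /hasP [v hv svu].
have nv := nus' v hv.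
have [l [ln0 lE]] := lin_prop nv nu svu.
set rest := rem v us'.
have pr : perm_eq us' (v :: rest) by apply: perm_to_rem.
have nrest : forall w, w \in rest -> nonzero_pt w.
  by move=> w hw; apply: nus'; rewrite (perm_mem pr) inE hw orbT.
have srest : (size rest <= N.-1)%N.
  by move: hN; rewrite (perm_size pr) /=; case: N {IH} => [|N'] //=; rewrite !ltnS.
have evr : forall t, nonzero_pt t -> ~~ odd (count (samep^~ t) rest).
  move=> t nt; have := ev t nt; rewrite /= (permP pr) /=.
  have -> : samep v t = samep u t.
    apply/idP/idP => h; first by apply: (samep_trans nv); rewrite // samep_sym.
    by apply: (samep_trans nu).
  by rewrite !oddD addbA addbb.
have [l' [vs [l'n0 svs nvs rE]]] := IH rest (leq_trans srest (leq_pred N)) nrest evr.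
exists (l * l'), (u :: vs); split.
- by rewrite mulf_neq0.
- by rewrite /= doubleS svs (perm_size pr).
- by move=> w; rewrite inE => /orP [/eqP ->|]; [exact: nu | exact: nvs].
rewrite big_cons (perm_big _ pr) big_cons rE lE big_cons mpolyCM -mul_mpolyC.
rewrite /=; ring.
Qed.


Lemma distribute (us : seq (K * K)) (U V C : P2) mU mV :
  (forall u, u \in us -> nonzero_pt u) -> U \is mU.-homog -> V \is mV.-homog ->
  \prod_(u <- us) lin_at u * C = U * V ->
  exists (F1 F2 a b : P2) e1 e2, [/\ \prod_(u <- us) lin_at u = F1 * F2,
    U = F1 * b, V = F2 * a, F1 \is e1.-homog & F2 \is e2.-homog].
Proof.
elim: us U V C mU mV => [|u us IH] U V C mU mV nus hU hV E.
  exists 1, 1, V, U, 0%N, 0%N; split; rewrite ?mul1r ?big_nil ?mulr1 //; exact: dhomog1.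
have nu : nonzero_pt u by apply: nus; rewrite inE eqxx.
have nus' : forall w, w \in us -> nonzero_pt w by move=> w hw; apply: nus; rewrite inE hw orbT.
have ln := lin_neq0 nu.
have : (U * V).@[ev2 u] = 0 by rewrite -E big_cons mevalM mevalM lin_self !mul0r.
move/eqP; rewrite mevalM mulf_eq0 => /orP [/eqP Uu|/eqP Vu].
  have [U' hU' UE] := core hU nu Uu.
  have E' : \prod_(w <- us) lin_at w * C = U' * V.
    by apply: (mulfI ln); move: E; rewrite big_cons UE /= !mulrA.
  have [F1 [F2 [a [b [e1 [e2 [PE UE' VE h1 h2]]]]]]] := IH _ _ _ _ _ nus' hU' hV E'.
  exists (lin_at u * F1), F2, a, b, (1 + e1)%N, e2; split => //.
  - by rewrite big_cons PE /= mulrA.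
  - by rewrite UE UE' mulrA.
  - by apply: dhomogM => //; apply: lin_homog.
have [V' hV' VE] := core hV nu Vu.
have E' : \prod_(w <- us) lin_at w * C = U * V'.
  apply: (mulfI ln); rewrite mulrA; move: E; rewrite big_cons VE /= => ->; ring.
have [F1 [F2 [a [b [e1 [e2 [PE UE' VE' h1 h2]]]]]]] := IH _ _ _ _ _ nus' hU hV' E'.
exists F1, (lin_at u * F2), a, b, e1, (1 + e2)%N; split => //.
- by rewrite big_cons PE /=; ring.
- by rewrite VE VE' mulrA.
- by apply: dhomogM => //; apply: lin_homog.
Qed.


Local Notation P3 := {mpoly K[3]}.

Definition ev3 (x y z : K) : 'I_3 -> K :=
  fun i => if val i == 0%N then x else if val i == 1%N then y else z.

Lemma to3_eval (f : P2) x y z : (to3 f).@[ev3 x y z] = f.@[ev2 (x, y)].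
Proof.
rewrite /to3 comp_mpoly_meval; apply: meval_eq => i.
rewrite (tnth_nth 0) /ev2; case: i => [[|[|i]] hi] //=.
- by rewrite /x3 mevalXU /ev3 /= inordK.
- by rewrite /y3 mevalXU /ev3 /= inordK.
Qed.

Lemma z3_eval x y z : (z3 K).@[ev3 x y z] = z.
Proof. by rewrite /z3 mevalXU /ev3 /= inordK. Qed.

Lemma to3M (f g : P2) : to3 (f * g) = to3 f * to3 g.
Proof. exact: rmorphM. Qed.
Lemma to3D (f g : P2) : to3 (f + g) = to3 f + to3 g.
Proof. exact: raddfD. Qed.
Lemma to3N (f : P2) : to3 (- f) = - to3 f.
Proof. exact: raddfN. Qed.
Lemma to3n (k : nat) : to3 (k%:R : P2) = k%:R.
Proof. exact: rmorph_nat. Qed.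

Lemma curve_eval (F G H : P2) x y z : (curve_poly F G H).@[ev3 x y z] =
  F.@[ev2 (x, y)] * z ^+ 2 + 2%:R * G.@[ev2 (x, y)] * z + H.@[ev2 (x, y)].
Proof.
by rewrite /curve_poly !mevalD !mevalM !to3_eval z3_eval rmorph_nat expr2.
Qed.

Lemma const_eval (A : P3) v w : (msize A <= 1)%N -> A.@[v] = A.@[w].
Proof. by move=> /msize1_polyC ->; rewrite !mevalC. Qed.

Lemma nonconst (F1 a : P2) e : F1 \is e.-homog -> F1 != 0 ->
  (1 < msize (to3 F1 * z3 K + to3 a))%N.
Proof.
move=> hF Fn0; rewrite ltnNge; apply/negP => hA.
have [x hx] := nonvanish hF Fn0.
have := const_eval (ev3 x 1 1) (ev3 x 1 0) hA.
rewrite !mevalD !mevalM !to3_eval !z3_eval mulr1 mulr0 add0r => /(congr1 (fun w => w - a.@[ev2 (x, 1)])); rewrite addrK subrr => e0.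
by move: hx; rewrite e0 eqxx.
Qed.


Lemma no_common_root (F G H : P2) mF mG mH (t : K * K) :
  F \is mF.-homog -> G \is mG.-homog -> H \is mH.-homog -> F != 0 ->
  mirreducible (curve_poly F G H) -> nonzero_pt t ->
  F.@[ev2 t] = 0 -> G.@[ev2 t] = 0 -> H.@[ev2 t] = 0 -> False.
Proof.
move=> hF hG hH Fn0 irr nt Ft Gt Ht.
have [F' _ FE] := core hF nt Ft.
have [G' _ GE] := core hG nt Gt.
have [H' _ HE] := core hH nt Ht.
pose Q' := to3 F' * z3 K ^+ 2 + 2%:R * to3 G' * z3 K + to3 H'.
have PE : curve_poly F G H = to3 (lin_at t) * Q'.
  by rewrite /curve_poly /Q' FE GE HE !to3M; ring.
case: irr => _ /(_ _ _ PE) [hl|hq].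
  have e1 := const_eval (ev3 1 0 0) (ev3 0 0 0) hl.
  have e2 := const_eval (ev3 0 1 0) (ev3 0 0 0) hl.
  move: e1 e2; rewrite !to3_eval !eval_lin /= !mulr0 !mulr1 !subr0 sub0r.
  move=> e1 /eqP; rewrite oppr_eq0 => /eqP e2.
  by case: nt; rewrite ?e1 ?e2 eqxx.
have [x hx] := nonvanish hF Fn0.
have ez : forall z, (curve_poly F G H).@[ev3 x 1 z] = (curve_poly F G H).@[ev3 x 1 0].
  by move=> z; rewrite PE !mevalM (const_eval (ev3 x 1 z) (ev3 x 1 0) hq) !to3_eval.
have E1 := ez 1; have E2 := ez (-1).
rewrite !curve_eval in E1 E2.
set f := F.@[_] in E1 E2 hx; set g := G.@[_] in E1 E2; set h := H.@[_] in E1 E2.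
have h2 : 2%:R * f = 0.
  transitivity ((f * 1 ^+ 2 + 2%:R * g * 1 + h) - (f * 0 ^+ 2 + 2%:R * g * 0 + h) +
    ((f * (-1) ^+ 2 + 2%:R * g * (-1) + h) - (f * 0 ^+ 2 + 2%:R * g * 0 + h))); first ring.
  by rewrite E1 E2 !subrr addr0.
by move: h2 => /eqP; rewrite mulf_eq0 pnatr_eq0 /= (negbTE hx).
Qed.

Lemma prod_lin_homog (vs : seq (K * K)) :
  \prod_(v <- vs) lin_at v \is (size vs).-homog.
Proof.
elim: vs => [|v vs IH]; first by rewrite big_nil; exact: dhomog1.
by rewrite big_cons; exact: (dhomogM (lin_homog v) IH).
Qed.


Lemma decomp_of_ro (W : P2) m (t : K * K) k : W \is m.-homog -> W != 0 ->
  nonzero_pt t -> root_ord W t k -> decomp W t k.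
Proof.
move=> hW Wn0 nt ro; have [j dj] := decomp_exists hW Wn0 nt.
by rewrite -(decomp_ord nt dj ro).
Qed.

Lemma ro_neq0 (W : P2) t k : root_ord W t k -> W != 0.
Proof. by move=> [_ nd]; apply/eqP => W0; apply: nd; exists 0; rewrite W0 mul0r. Qed.

Theorem mainK (d : nat) (F G H : P2) (T : seq (nat * nat)) :
  F \is (d - 2)%N.-homog -> G \is (d - 1)%N.-homog -> H \is d.-homog ->
  mirreducible (curve_poly F G H) ->
  singular_pt (curve_poly F G H) (Q0 K) ->
  mult_at (curve_poly F G H) (Q0 K) (d - 2) ->
  two_formula F G H T ->
  [/\ (\sum_(pq <- T) pq.2 = 2 * \sum_(pq <- T) pq.1 + 2)%N,
      all (fun pq : nat * nat => (pq.1 == pq.2) || ~~ odd (minn pq.1 pq.2)) T &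
      has (fun pq : nat * nat => odd pq.2) T].
Proof.
move=> hF hG hH irr sing mult [ts [sizeE nts dts cov ro]].
have d3 : (3 <= d)%N.
  case: mult => [[a [da ha]] _]; rewrite leqNgt; apply/negP => hd.
  have e : (d - 2 = 0)%N by lia.
  move: da; rewrite e => /eqP; rewrite mdeg_eq0 => /eqP a0.
  case: sing => _ [P0 _]; by move: ha; rewrite a0 mderivm0m P0 eqxx.
set D := discr F G H.
have hD : D \is (d - 2 + d)%N.-homog.
  apply: rpredB; last exact: dhomogM.
  have -> : (d - 2 + d = (d - 1) * 2)%N by lia.
  exact: dhomogMn.
have hFD : F * D \is (d - 2 + (d - 2 + d))%N.-homog by exact: dhomogM.
have [t0 [nt0 FDt0]] := root_exists hFD (ltac:(lia) : (0 < d - 2 + (d - 2 + d))%N).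
have [i0 hi0 _] := (cov t0 nt0).1 FDt0.
have [roF roD] := ro 0%N (leq_ltn_trans (leq0n _) hi0).
have Fn0 := ro_neq0 roF.
have Dn0 := ro_neq0 roD.
have covF : forall t, nonzero_pt t -> F.@[ev2 t] = 0 ->
    exists2 i, (i < size ts)%N & same_pt t (nth (0, 0) ts i).
  by move=> t nt Ft; apply/(cov t nt); rewrite mevalM Ft mul0r.
have covD : forall t, nonzero_pt t -> D.@[ev2 t] = 0 ->
    exists2 i, (i < size ts)%N & same_pt t (nth (0, 0) ts i).
  by move=> t nt Dt; apply/(cov t nt); rewrite mevalM Dt mulr0.
have sumF := @sum_ord _ _ _ (fun i => (nth (0, 0)%N T i).1) hF Fn0 nts dts covF (fun i h => (ro i h).1).
have sumD := @sum_ord _ _ _ (fun i => (nth (0, 0)%N T i).2) hD Dn0 nts dts covD (fun i h => (ro i h).2).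
split.
- rewrite !(big_nth (0, 0)%N) !big_mkord -sizeE sumF sumD; lia.
- apply/(all_nthP (0, 0)%N) => i hi; rewrite -sizeE in hi.
  have nt := nts i hi; have [roFi roDi] := ro i hi.
  set t := nth (0, 0) ts i in nt roFi roDi.
  set p := (nth (0, 0)%N T i).1 in roFi *; set q := (nth (0, 0)%N T i).2 in roDi *.
  have dF := decomp_of_ro hF Fn0 nt roFi.
  have dD := decomp_of_ro hD Dn0 nt roDi.
  have uD : forall k, decomp D t k -> k = q by move=> k dk; exact: decomp_ord nt dk roDi.
  case: (posnP p) => [->|p0]; first by rewrite min0n orbT.
  have Ft : F.@[ev2 t] = 0 by apply/eqP; rewrite (decomp_root dF).
  have [Gt|Gtn0] := eqVneq G.@[ev2 t] 0; last first.
    have Gn0 : G != 0 by apply: contra Gtn0 => /eqP ->; rewrite meval0.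
    have [g dG] := decomp_exists hG Gn0 nt.
    have g0 : g = 0%N by apply/eqP; rewrite -leqn0 leqNgt -(decomp_root dG).
    rewrite g0 in dG; have dGG := decomp_mul dG dG.
    have [H0|Hn0] := eqVneq H 0.
      have : decomp D t 0 by rewrite /D /discr H0 mulr0 subr0 expr2.
      by move/uD => <-; rewrite minn0 orbT.
    have [h dH] := decomp_exists hH Hn0 nt.
    have dFH := decomp_mul dF dH.
    have : decomp D t 0 by apply: (decomp_sub_lt _ dFH); rewrite ?expr2 //; lia.
    by move/uD => <-; rewrite minn0 orbT.
  have Htn0 : H.@[ev2 t] != 0.
    by apply/eqP => Ht; apply: (no_common_root hF hG hH Fn0 irr nt Ft Gt Ht).
  have Hn0 : H != 0 by apply: contra Htn0 => /eqP ->; rewrite meval0.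
  have [h dH] := decomp_exists hH Hn0 nt.
  have h0 : h = 0%N by apply/eqP; rewrite -leqn0 leqNgt -(decomp_root dH).
  rewrite h0 in dH; have dFH := decomp_mul dF dH; rewrite addn0 in dFH.
  have [G0|Gn0] := eqVneq G 0.
    have : decomp D t p by rewrite /D /discr G0 expr0n /= sub0r; apply: decomp_neg.
    by move/uD => ->; rewrite eqxx.
  have [g dG] := decomp_exists hG Gn0 nt.
  have g0 : (0 < g)%N by rewrite -(decomp_root dG) Gt.
  have dGG := decomp_mul dG dG.
  case: (ltngtP (g + g) p) => hgp.
  + have : decomp D t (g + g) by rewrite /D /discr expr2; exact: decomp_sub_lt dGG dFH hgp.
    by move/uD => <-; rewrite (minn_idPr (ltnW hgp)) addnn odd_double orbT.
  + have : decomp D t p.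
      rewrite /D /discr -opprB; apply: decomp_neg; rewrite expr2.
      exact: decomp_sub_lt dFH dGG hgp.
    by move/uD => ->; rewrite eqxx.
  + rewrite hgp in dGG.
    have : mdvd (lin_at t ^+ p) D by rewrite /D /discr expr2; exact: decomp_sub_eq dGG dFH.
    move/(root_ord_ge roDi) => pq.
    by rewrite (minn_idPl pq) -hgp addnn odd_double orbT.
case: (boolP (has _ T)) => // hno; exfalso.
have ev : forall i, (i < size ts)%N -> ~~ odd (nth (0, 0)%N T i).2.
  move=> i hi; apply/negP => o; move/negP: hno; apply; apply/(has_nthP (0, 0)%N).
  by exists i; rewrite -?sizeE.
have [cD [usD [cDn0 susD nusD DE]]] := factorize hD Dn0.
have evD : forall t, nonzero_pt t -> ~~ odd (count (samep^~ t) usD).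
  move=> t nt; have dt := decomp_prod cDn0 nusD nt; rewrite -DE in dt.
  have [Dt|Dtn0] := eqVneq D.@[ev2 t] 0; last first.
    by move: Dtn0; rewrite (decomp_root dt) -leqNgt leqn0 => /eqP ->.
  have [i hi /samepP sti] := covD t nt Dt.
  have nti := nts i hi.
  have dti := decomp_prod cDn0 nusD nti; rewrite -DE in dti.
  have := decomp_ord nti dti (ro i hi).2 => ci.
  have -> : count (samep^~ t) usD = count (samep^~ (nth (0, 0) ts i)) usD.
    apply: eq_in_count => w hw /=; apply/idP/idP => h.
      exact: (samep_trans nt).
    by apply: (samep_trans nti) => //; rewrite samep_sym.
  by rewrite ci; apply: ev.
have [l [vs [ln0 svs nvs prodE]]] := square_even nusD evD.
pose S := (sqrtC (cD * l))%:MP * \prod_(v <- vs) lin_at v.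
have DS : D = S ^+ 2.
  have e : ((sqrtC (cD * l))%:MP ^+ 2 : P2) = (cD * l)%:MP.
    by rewrite expr2 -mpolyCM -expr2 sqrtCK.
  rewrite DE prodE /S exprMn e mpolyCM; ring.
have sv : size vs = (d - 1)%N by move: svs; rewrite susD; lia.
have hS : S \is (d - 1)%N.-homog.
  by rewrite /S mul_mpolyC; apply: rpredZ; rewrite -sv; apply: prod_lin_homog.
have hU : G + S \is (d - 1)%N.-homog by apply: rpredD.
have hV : G - S \is (d - 1)%N.-homog by apply: rpredB.
have FHE : F * H = (G + S) * (G - S).
  apply/eqP; rewrite -subr_eq0; apply/eqP.
  transitivity (S ^+ 2 - (G ^+ 2 - F * H)); first ring.
  by rewrite -DS /D /discr subrr.
have [cF [usF [cFn0 susF nusF FE]]] := factorize hF Fn0.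
have E : \prod_(u <- usF) lin_at u * (cF%:MP * H) = (G + S) * (G - S).
  by rewrite -FHE FE; ring.
have [F1' [F2 [a [b [e1 [e2 [PE UE VE h1 h2]]]]]]] := distribute nusF hU hV E.
pose F1 := cF%:MP * F1'; pose b' := (cF^-1)%:MP * b.
have cc : cF%:MP * (cF^-1)%:MP = 1 :> P2 by rewrite -mpolyCM mulfV.
have FE' : F = F1 * F2 by rewrite FE PE /F1; ring.
have UE' : G + S = F1 * b'.
  rewrite UE /F1 /b'; transitivity (cF%:MP * (cF^-1)%:MP * (F1' * b)); first by rewrite cc mul1r.
  ring.
have HE : H = a * b'.
  apply: (mulfI Fn0); rewrite FHE UE' VE FE'; ring.
have GE : 2%:R * G = F1 * b' + F2 * a by rewrite -UE' -VE; ring.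
have PE' : curve_poly F G H = (to3 F1 * z3 K + to3 a) * (to3 F2 * z3 K + to3 b').
  have t2G : 2%:R * to3 G = to3 F1 * to3 b' + to3 F2 * to3 a.
    by rewrite -to3n -to3M GE to3D !to3M.
  rewrite /curve_poly t2G FE' HE !to3M; ring.
have F1n0 : F1 != 0 by apply: contra Fn0 => /eqP F10; rewrite FE' F10 mul0r.
have F2n0 : F2 != 0 by apply: contra Fn0 => /eqP F20; rewrite FE' F20 mulr0.
have hF1 : F1 \is e1.-homog by rewrite /F1 mul_mpolyC; apply: rpredZ.
case: irr => _ /(_ _ _ PE') [hA|hB].
  by move: hA; rewrite leqNgt (nonconst a hF1 F1n0).
by move: hB; rewrite leqNgt (nonconst b' h2 F2n0).
Qed.

End Bin.

Theorem lemma1 (R : realType) (d : nat) (F G H : {mpoly (complex R)[2]})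
    (T : seq (nat * nat)) :
  F \is (d - 2)%N.-homog -> G \is (d - 1)%N.-homog -> H \is d.-homog ->
  mirreducible (curve_poly F G H) ->
  curve_type (curve_poly F G H) d (d - 2) ->
  singular_pt (curve_poly F G H) (Q0 (complex R)) ->
  mult_at (curve_poly F G H) (Q0 (complex R)) (d - 2) ->
  two_formula F G H T ->
  [/\ (\sum_(pq <- T) pq.2 = 2 * \sum_(pq <- T) pq.1 + 2)%N,
      all (fun pq : nat * nat => (pq.1 == pq.2) || ~~ odd (minn pq.1 pq.2)) T &
      has (fun pq : nat * nat => odd pq.2) T].
Proof.
move=> hF hG hH irr _ sing mult tf.
exact: (@mainK (complex R) d F G H T hF hG hH irr sing mult tf).
Qed.
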